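(* Let $x^k\in\mathbb{R}^n$, let $G_k\in\mathcal{S}_{\ell,\mu}(F,x^k)$, let $x^{k+1}$ be the minimizer of $\min_{x\in\mathbb{R}^n}\max_{c^*\in C}\langle c^*,G_k(x)\rangle$, and let $c_k^*$ be a maximizer of $\max_{c^*\in C}\min_{x\in\mathbb{R}^n}\langle c^*,G_k(x)\rangle$. Then for all $x\in\mathbb{R}^n$: (i) $H_k(x)\preceq_K\tfrac12\|x-x^k\|^2\ell$; (ii) $\langle c_k^*,F(x^{k+1})\rangle+\tfrac12\|x^{k+1}-x\|^2\langle c_k^*,\mu\rangle\le\langle c_k^*,F(x)\rangle+\tfrac12\|x^k-x\|^2\langle c_k^*,\ell\rangle$.
   Context: $K\subset\mathbb{R}^m$ is a closed, convex, pointed cone with nonempty interior; $y\preceq_K y'$ means $y'-y\in K$. $K^*=\{c\in\mathbb{R}^m:\langle c,y\rangle\ge0\ \forall y\in K\}$, and $C\subset\mathbb{R}^m$ is a compact convex set with $0\notin C$ and $\mathrm{cone}(C)=K^*$. $F:\mathbb{R}^n\to\mathbb{R}^m$ is differentiable with Jacobian $JF$. For differentiable $\Phi$: strongly $K$-convex with $\mu\in K$ means $J\Phi(x)(y-x)+\tfrac12\|y-x\|^2\mu\preceq_K\Phi(y)-\Phi(x)$ for all $x,y$; $K$-smooth with $\ell\in K$ means $\Phi(y)-\Phi(x)\preceq_K J\Phi(x)(y-x)+\tfrac12\|y-x\|^2\ell$ for all $x,y$. Surrogate class: for $\ell\in K$, $\mu\in\mathrm{int}(K)$ and $x^k\in\mathbb{R}^n$,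 $\mathcal{S}_{\ell,\mu}(F,x^k)$ is the set of differentiable $G_k:\mathbb{R}^n\to\mathbb{R}^m$ that are strongly $K$-convex with $\mu$ and such that, with $x^{k+1}$ the (unique) minimizer of $x\mapsto\max_{c^*\in C}\langle c^*,G_k(x)\rangle$ and $H_k:=G_k-F+F(x^k)$: (a) $F(x^{k+1})-F(x^k)\preceq_K G_k(x^{k+1})$; (b) $H_k$ is $K$-smooth with $\ell$, $H_k(x^k)=0$ and $JH_k(x^k)=0$. *)

(* Defs.v *)
From HB Require Import structures.
From mathcomp Require Import all_boot all_order all_algebra.
From mathcomp Require Import all_classical all_reals all_analysis.
Set Implicit Arguments. Unset Strict Implicit. Unset Printing Implicit Defensive.
Import Order.TTheory GRing.Theory Num.Theory.
Import numFieldNormedType.Exports.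
Local Open Scope classical_set_scope.
Local Open Scope ring_scope.

Section Defs.
Variable R : realType.

Definition dotv (m : nat) (u v : 'rV[R]_m) : R := \sum_(i < m) u ord0 i * v ord0 i.
Definition sqnorm (m : nat) (v : 'rV[R]_m) : R := \sum_(i < m) v ord0 i ^+ 2.

Definition convex_setv (m : nat) (A : set 'rV[R]_m) : Prop :=
  forall x y (t : R), A x -> A y -> 0 <= t -> t <= 1 -> A ((1 - t) *: x + t *: y).

Definition is_cone (m : nat) (A : set 'rV[R]_m) : Prop :=
  forall (t : R) y, 0 <= t -> A y -> A (t *: y).

Definition pointed (m : nat) (A : set 'rV[R]_m) : Prop :=
  forall y, A y -> A (- y) -> y = 0.

Definition proper_cone (m : nat) (K : set 'rV[R]_m) : Prop :=
  [/\ closed K, convex_setv K, is_cone K, pointed K & K° !=set0].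

Definition cle (m : nat) (K : set 'rV[R]_m) (y y' : 'rV[R]_m) : Prop := K (y' - y).

Definition dual_cone (m : nat) (K : set 'rV[R]_m) : set 'rV[R]_m :=
  [set c | forall y, K y -> 0 <= dotv c y].

Definition cone_hull (m : nat) (C : set 'rV[R]_m) : set 'rV[R]_m :=
  [set v | v = 0 \/ exists t c, [/\ 0 <= t, C c & v = t *: c]].

Definition maxoverC (m : nat) (C : set 'rV[R]_m) (y : 'rV[R]_m) : R :=
  sup [set dotv c y | c in C].

Definition minoverX (n m : nat) (G : 'rV[R]_n -> 'rV[R]_m) (c : 'rV[R]_m) : R :=
  inf [set dotv c (G x) | x in [set: 'rV[R]_n]].

Definition strongly_Kconvex (n m : nat) (K : set 'rV[R]_m)
    (Phi : 'rV[R]_n -> 'rV[R]_m) (mu : 'rV[R]_m) : Prop :=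
  (forall x, differentiable Phi x) /\
  forall x y, cle K ('d Phi x (y - x) + (2^-1 * sqnorm (y - x)) *: mu) (Phi y - Phi x).

Definition Ksmooth (n m : nat) (K : set 'rV[R]_m)
    (Phi : 'rV[R]_n -> 'rV[R]_m) (l : 'rV[R]_m) : Prop :=
  (forall x, differentiable Phi x) /\
  forall x y, cle K (Phi y - Phi x) ('d Phi x (y - x) + (2^-1 * sqnorm (y - x)) *: l).

Definition Hk (n m : nat) (G F : 'rV[R]_n -> 'rV[R]_m) (xk : 'rV[R]_n) :=
  fun x => G x - F x + F xk.

(* surrogate class S_{l,mu}(F, x^k); the conditions (a) are required at the
   (unique) minimizer x^{k+1} of x |-> max_{c in C} <c, G x>, i.e. at every
   minimizer. *)
Definition surrogate (n m : nat) (K C : set 'rV[R]_m) (l mu : 'rV[R]_m)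
    (F : 'rV[R]_n -> 'rV[R]_m) (xk : 'rV[R]_n) (G : 'rV[R]_n -> 'rV[R]_m) : Prop :=
  [/\ strongly_Kconvex K G mu,
      (forall z, (forall x, maxoverC C (G z) <= maxoverC C (G x)) ->
         cle K (F z - F xk) (G z)),
      Ksmooth K (Hk G F xk) l,
      Hk G F xk xk = 0
    & forall v, 'd (Hk G F xk) xk v = 0].

End Defs.

(* Main.v *)
Require Import Defs.
From HB Require Import structures.
From mathcomp Require Import all_boot all_order all_algebra.
From mathcomp Require Import all_classical all_reals all_analysis.
From mathcomp Require Import ring lra.
Set Implicit Arguments. Unset Strict Implicit. Unset Printing Implicit Defensive.
Import Order.TTheory GRing.Theory Num.Theory.
Import numFieldNormedType.Exports.
Local Open Scope classical_set_scope.
Local Open Scope ring_scope.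

Section H.
Variable R : realType.
Variable m : nat.
Implicit Types (a b c y z : 'rV[R]_m).

Lemma dotvDl a b y : dotv (a + b) y = dotv a y + dotv b y.
Proof. by rewrite /dotv -big_split; apply: eq_bigr => i _; rewrite mxE mulrDl. Qed.
Lemma dotvDr c a b : dotv c (a + b) = dotv c a + dotv c b.
Proof. by rewrite /dotv -big_split; apply: eq_bigr => i _; rewrite mxE mulrDr. Qed.
Lemma dotvZl t a y : dotv (t *: a) y = t * dotv a y.
Proof. by rewrite /dotv mulr_sumr; apply: eq_bigr => i _; rewrite mxE mulrA. Qed.
Lemma dotvZr t c a : dotv c (t *: a) = t * dotv c a.
Proof. by rewrite /dotv mulr_sumr; apply: eq_bigr => i _; rewrite mxE mulrCA. Qed.
Lemma dotvNr c a : dotv c (- a) = - dotv c a.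
Proof. by rewrite -scaleN1r dotvZr mulN1r. Qed.
Lemma dotvBr c a b : dotv c (a - b) = dotv c a - dotv c b.
Proof. by rewrite dotvDr dotvNr. Qed.
Lemma dotvNl c a : dotv (- c) a = - dotv c a.
Proof. by rewrite -scaleN1r dotvZl mulN1r. Qed.
Lemma dotv0r c : dotv c 0 = 0.
Proof. by rewrite /dotv big1 // => i _; rewrite mxE mulr0. Qed.
Lemma dotv_sumr (I : Type) (r : seq I) (f : I -> 'rV[R]_m) c :
  dotv c (\sum_(i <- r) f i) = \sum_(i <- r) dotv c (f i).
Proof.
elim: r => [|i r IH]; first by rewrite !big_nil dotv0r.
by rewrite !big_cons dotvDr IH.
Qed.
Lemma sqnormE a : sqnorm a = dotv a a.
Proof. by rewrite /sqnorm /dotv; apply: eq_bigr => i _; rewrite expr2. Qed.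
Lemma sqnorm_ge0 a : 0 <= sqnorm a.
Proof. by rewrite /sqnorm sumr_ge0 // => i _; rewrite sqr_ge0. Qed.
Lemma sqnormZ t a : sqnorm (t *: a) = t ^+ 2 * sqnorm a.
Proof. by rewrite /sqnorm mulr_sumr; apply: eq_bigr => i _; rewrite mxE exprMn. Qed.
Lemma sqnormN a : sqnorm (- a) = sqnorm a.
Proof. by rewrite -scaleN1r sqnormZ sqrrN expr1n mul1r. Qed.
Lemma sqnormB a b : sqnorm (a - b) = sqnorm (b - a).
Proof. by rewrite -sqnormN opprB. Qed.
Lemma sqnorm_gt0 a : a != 0 -> 0 < sqnorm a.
Proof.
move=> a0; rewrite lt_def sqnorm_ge0 andbT; apply: contra a0 => /eqP.
rewrite /sqnorm => /eqP; rewrite psumr_eq0 => [/allP H|i _]; last exact: sqr_ge0.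
apply/eqP/rowP => i; rewrite mxE; apply/eqP; rewrite -sqrf_eq0.
by have := H i (mem_index_enum i); rewrite implyTb.
Qed.

Lemma dotv_cont y : continuous (fun c : 'rV[R]_m => dotv c y).
Proof.
have -> : (fun c : 'rV[R]_m => dotv c y) = \sum_(i < m) (fun c : 'rV[R]_m => c ord0 i * y ord0 i).
  by apply/funext => c; rewrite fct_sumE.
elim/big_ind: _ => //; first by move=> x; exact: (@cst_continuous _ R^o 0).
  by move=> f g cf cg x; apply: (@continuousD _ R^o); [exact: cf|exact: cg].
move=> i _ x.
apply: (@continuousM R _ (fun c : 'rV[R]_m => c ord0 i) (fun=> y ord0 i)).
  exact: coord_continuous.
exact: cst_continuous.
Qed.

Lemma sum_ge_term (T : eqType) (s : seq T) (F : T -> R) x0 :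
  x0 \in s -> (forall x, 0 <= F x) -> F x0 <= \sum_(x <- s) F x.
Proof.
elim: s => [//|y s IH]; rewrite inE big_cons => /orP [/eqP ->|/IH H] F0.
  by rewrite lerDl sumr_ge0.
by rewrite (le_trans (H F0)) // lerDr.
Qed.

Lemma maxover_ub (C : set 'rV[R]_m) c y :
  compact C -> C c -> dotv c y <= maxoverC C y.
Proof.
move=> cC Cc.
have [c1 c1C H] := @EVT_max_rV R m (fun c => dotv c y) C (ex_intro _ c Cc) cC
  (continuous_subspaceT (@dotv_cont y)).
apply: ub_le_sup; last by exists c.
exists (dotv c1 y) => _ [d Cd <-]; by apply: H; rewrite inE.
Qed.

Lemma maxover_le (C : set 'rV[R]_m) y (bd : R) :
  C !=set0 -> (forall c, C c -> dotv c y <= bd) -> maxoverC C y <= bd.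
Proof.
move=> [c Cc] H; apply: ge_sup; first by exists (dotv c y), c.
by move=> _ [d Cd <-]; apply: H.
Qed.

Lemma Cdual (K C : set 'rV[R]_m) : cone_hull C = dual_cone K ->
  forall c y, C c -> K y -> 0 <= dotv c y.
Proof.
move=> E c y Cc Ky; have : dual_cone K c.
  by rewrite -E; right; exists 1, c; split => //; rewrite scale1r.
by apply.
Qed.
End H.

Lemma sc_ineq (R : realType) n m (K : set 'rV[R]_m) (G : 'rV[R]_n -> 'rV[R]_m) mu c x y :
  strongly_Kconvex K G mu -> (forall k, K k -> 0 <= dotv c k) ->
  dotv c (G x) + dotv c ('d G x (y - x)) + 2^-1 * sqnorm (y - x) * dotv c mu
    <= dotv c (G y).
Proof.
case=> _ /(_ x y) H /(_ _ H); rewrite !(dotvBr, dotvDr, dotvZr).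
lra.
Qed.

Lemma conv_sum (R : realType) n m (K : set 'rV[R]_m) (G : 'rV[R]_n -> 'rV[R]_m) mu c
  (s : seq 'rV[R]_n) (lam : 'rV[R]_n -> R) :
  strongly_Kconvex K G mu -> (forall k, K k -> 0 <= dotv c k) -> K mu ->
  (forall x, 0 <= lam x) -> \sum_(x <- s) lam x = 1 ->
  dotv c (G (\sum_(x <- s) lam x *: x)) <= \sum_(x <- s) lam x * dotv c (G x).
Proof.
move=> sc dual Kmu l0 l1.
have [xb exb] : exists xb : 'rV[R]_n, xb = \sum_(x <- s) lam x *: x by eexists.
rewrite -exb.
have step x : dotv c (G xb) + dotv c ('d G xb (x - xb)) <= dotv c (G x).
  have := @sc_ineq R n m K G mu c xb x sc dual.
  have := dual _ Kmu; have := sqnorm_ge0 (x - xb).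
  move=> h1 h2 h3; apply: le_trans h3; rewrite lerDl; apply: mulr_ge0 => //.
  by apply: mulr_ge0 => //; rewrite invr_ge0.
apply: le_trans (ler_sum _ (fun x _ => ler_wpM2l (l0 x) (step x))).
under eq_bigr do rewrite mulrDr.
rewrite big_split /= -mulr_suml l1 mul1r lerDl.
have -> : \sum_(x <- s) lam x * dotv c ('d G xb (x - xb)) =
          \sum_(x <- s) dotv c ('d G xb (lam x *: (x - xb))).
  by apply: eq_bigr => x _; rewrite linearZ dotvZr.
rewrite -dotv_sumr -raddf_sum.
set S := \sum_(x <- s) _.
have -> : S = 0.
  rewrite /S (eq_bigr (fun x => lam x *: x - lam x *: xb)); last by move=> x _; rewrite scalerBr.
  by rewrite sumrB -scaler_suml l1 scale1r exb subrr.
by rewrite raddf0 dotv0r.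
Qed.

Lemma qineq (R : realType) (a0 D t : R) : 0 <= t ->
  (Num.min (a0 + t * D) 0) ^+ 2 <=
  (Num.min a0 0) ^+ 2 + 2 * t * Num.min a0 0 * D + 2 * t ^+ 2 * D ^+ 2.
Proof.
move=> t0.
have [h1|h1] := lerP a0 0; have [h2|h2] := lerP (a0 + t * D) 0.
- nra.
- nra.
- nra.
- nra.
Qed.

Lemma minaE (R : realType) (a : R) : Num.min a 0 * a = (Num.min a 0) ^+ 2.
Proof.
by have [h|h] := lerP a 0; rewrite expr2 // !mul0r.
Qed.

Lemma finite_minimax (R : realType) m (C : set 'rV[R]_m) (T : eqType) (s : seq T)
  (g : T -> 'rV[R]_m) (p : R) :
  compact C -> convex_setv C -> C !=set0 ->
  (forall c, C c -> exists2 x, x \in s & dotv c (g x) < p) ->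
  exists lam : T -> R, [/\ forall x, 0 <= lam x, \sum_(x <- s) lam x = 1 &
    exists2 d, 0 < d & forall c, C c -> \sum_(x <- s) lam x * dotv c (g x) <= p - d].
Proof.
move=> cC cvC C0 cov.
pose a x c := dotv c (g x) - p.
pose H c := \sum_(x <- s) (Num.min (a x c) 0) ^+ 2.
have Hcont : continuous H.
  have -> : H = \sum_(x <- s) (fun c => (Num.min (a x c) 0) ^+ 2).
    by apply/funext => c; rewrite fct_sumE.
  elim/big_ind: _ => //; first by move=> x; exact: (@cst_continuous _ R^o 0).
    by move=> f1 f2 cf1 cf2 x; apply: (@continuousD _ R^o); [exact: cf1|exact: cf2].
  move=> x _ c; rewrite /=.
  have ca : continuous (fun c => Num.min (a x c) 0).
    move=> c1; apply: (@continuous_min R _ (fun c => a x c) (fun=> 0)).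
      apply: (@continuousB _ R^o _ (fun c => dotv c (g x)) (fun=> p)).
        exact: dotv_cont.
      exact: cst_continuous.
    exact: cst_continuous.
  under eq_fun do rewrite expr2.
  exact: (@continuousM R _ (fun c => Num.min (a x c) 0) (fun c => Num.min (a x c) 0) c (ca c) (ca c)).
have [c0 c0C Hmin] := EVT_min_rV C0 cC (continuous_subspaceT Hcont).
have c0C' : C c0 by rewrite inE in c0C.
pose w x := Num.min (a x c0) 0.
have wle x : w x <= 0 by rewrite /w ge_min lexx orbT.
have [x0 x0s ax0] := cov c0 c0C'.
have w0 : w x0 < 0.
  by rewrite /w (min_l (ltW _)) // /a subr_lt0.
have Hpos : 0 < H c0.
  apply: (lt_le_trans _ (sum_ge_term (F := fun x => Num.min (a x c0) 0 ^+ 2) x0s _)).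
    rewrite /= -/(w x0); nra.
  by move=> x; rewrite sqr_ge0.
have VI c : C c -> H c0 <= \sum_(x <- s) w x * a x c.
  move=> Cc.
  pose D x := a x c - a x c0.
  have HE : H c0 = \sum_(x <- s) w x * a x c0.
    by apply: eq_bigr => x _; rewrite /w minaE.
  have -> : \sum_(x <- s) w x * a x c = H c0 + \sum_(x <- s) w x * D x.
    rewrite HE -big_split /=; apply: eq_bigr => x _; rewrite /D; ring.
  rewrite lerDl.
  apply/ler_addgt0Pr => e e0.
  pose M := \sum_(x <- s) D x ^+ 2.
  have M0 : 0 <= M by rewrite sumr_ge0 // => x _; rewrite sqr_ge0.
  pose t := Num.min 1 (e / (M + 1)).
  have M1 : 0 < M + 1 by rewrite ltr_wpDl.
  have t0 : 0 < t by rewrite /t lt_min ltr01 divr_gt0.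
  have t1 : t <= 1 by rewrite /t ge_min lexx.
  have te : t <= e / (M + 1) by rewrite /t ge_min lexx orbT.
  have Cct : C ((1 - t) *: c0 + t *: c) by apply: cvC => //; rewrite ltW.
  have act x : a x ((1 - t) *: c0 + t *: c) = a x c0 + t * D x.
    by rewrite /D /a dotvDl !dotvZl; ring.
  have := Hmin _ (mem_set Cct).
  have Hle : H ((1 - t) *: c0 + t *: c) <=
      H c0 + 2 * t * \sum_(x <- s) w x * D x + 2 * t ^+ 2 * M.
    rewrite /H !mulr_sumr -!big_split /=; apply: ler_sum => x _.
    rewrite act /w; apply: le_trans (qineq _ _ (ltW t0)) _.
    by rewrite !mulrA.
  move=> Hm; have : 0 <= 2 * t * (\sum_(x <- s) w x * D x + t * M).
    have := le_trans Hm Hle; lra.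
  rewrite pmulr_rge0; last by rewrite mulr_gt0.
  move=> h; apply: le_trans h _; rewrite lerD2l.
  apply: le_trans (_ : e / (M + 1) * M <= e).
    by rewrite ler_wpM2r.
  rewrite mulrAC ler_pdivrMr // ler_wpM2l ?(ltW e0) //; lra.
pose sig := \sum_(x <- s) - w x.
have sig0 : 0 < sig.
  apply: (lt_le_trans _ (sum_ge_term (F := fun x => - w x) x0s _)).
    by rewrite oppr_gt0.
  by move=> x; rewrite oppr_ge0.
exists (fun x => - w x / sig); split.
- by move=> x; rewrite divr_ge0 ?oppr_ge0 // ltW.
- by rewrite -mulr_suml divff // gt_eqF.
exists (H c0 / sig); first by rewrite divr_gt0.
move=> c Cc.
have E : \sum_(x <- s) - w x / sig * dotv c (g x) =
         sig^-1 * \sum_(x <- s) - w x * dotv c (g x).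
  by rewrite mulr_sumr; apply: eq_bigr => x _; rewrite mulrAC mulrC.
have I : \sum_(x <- s) - w x * dotv c (g x) <= p * sig - H c0.
  have := VI c Cc.
  have -> : \sum_(x <- s) w x * a x c =
            - \sum_(x <- s) - w x * dotv c (g x) + p * sig.
    rewrite /sig mulr_sumr -sumrN -big_split /=; apply: eq_bigr => x _.
    rewrite /a; ring.
  lra.
rewrite E.
have -> : p - H c0 / sig = sig^-1 * (p * sig - H c0).
  by field; rewrite gt_eqF.
by rewrite ler_wpM2l // invr_ge0 ltW.
Qed.

Lemma strong_dual (R : realType) n m (K C : set 'rV[R]_m) (G : 'rV[R]_n -> 'rV[R]_m) mu xs :
  compact C -> convex_setv C -> C !=set0 ->
  (forall c k, C c -> K k -> 0 <= dotv c k) -> K mu ->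
  strongly_Kconvex K G mu ->
  (forall x, maxoverC C (G xs) <= maxoverC C (G x)) ->
  exists2 cb, C cb & forall x, maxoverC C (G xs) <= dotv cb (G x).
Proof.
move=> cC cvC C0 dual Kmu sc hmin.
set p := maxoverC C (G xs).
apply: contrapT => nex.
have cov c : C c -> exists x, dotv c (G x) < p.
  move=> Cc; apply: contrapT => nx; apply: nex; exists c => // x.
  by case: (lerP p (dotv c (G x))) => // h; exfalso; apply: nx; exists x.
have cC' := cC; rewrite compact_cover in cC'.
have op (x : 'rV[R]_n) : setT x -> open [set c : 'rV[R]_m | dotv c (G x) < p].
  move=> _; have := @open_comp _ _ (fun c : 'rV[R]_m => dotv c (G x)) [set r | r < p]
     (fun c _ => @dotv_cont _ _ (G x) c) (@open_lt _ p).
  by [].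
have [D' _ sub] := cC' _ setT (fun x : 'rV[R]_n => [set c : 'rV[R]_m | dotv c (G x) < p]) op
  (fun c Cc => let: ex_intro x h := cov c Cc in ex_intro2 _ _ x I h).
have cov' c : C c -> exists2 x, x \in finmap.enum_fset D' & dotv c (G x) < p.
  by move=> Cc; have [x xD h] := sub c Cc; exists x.
have [lam [l0 l1 [d d0 hd]]] := finite_minimax cC cvC C0 cov'.
have := hmin (\sum_(x <- finmap.enum_fset D') lam x *: x).
have : maxoverC C (G (\sum_(x <- finmap.enum_fset D') lam x *: x)) <= p - d.
  apply: maxover_le C0 _ => c Cc.
  apply: le_trans (hd c Cc).
  exact: (conv_sum sc (fun k Kk => dual c k Cc Kk) Kmu l0 l1).
rewrite -/p; lra.
Qed.

Lemma quad_growth (R : realType) n m (K : set 'rV[R]_m) (G : 'rV[R]_n -> 'rV[R]_m) mu c xs x :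
  strongly_Kconvex K G mu -> (forall k, K k -> 0 <= dotv c k) -> 0 <= dotv c mu ->
  (forall y, dotv c (G xs) <= dotv c (G y)) ->
  dotv c (G xs) + 2^-1 * sqnorm (xs - x) * dotv c mu <= dotv c (G x).
Proof.
move=> sc dual k0 hmin.
rewrite sqnormB.
set S := sqnorm (x - xs); set k := dotv c mu.
set B := 2^-1 * S * k.
have S0 : 0 <= S by apply: sqnorm_ge0.
have B0 : 0 <= B by rewrite /B mulr_ge0 // mulr_ge0 // invr_ge0.
have key t : 0 < t -> t < 1 -> dotv c (G xs) + (1 - t) * B <= dotv c (G x).
  move=> t0 t1.
  pose yt := xs + t *: (x - xs).
  have h1 := @sc_ineq R n m K G mu c yt x sc dual.
  have h2 := @sc_ineq R n m K G mu c yt xs sc dual.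
  have h3 := hmin yt.
  have e1 : x - yt = (1 - t) *: (x - xs).
    by rewrite /yt scalerBl scale1r opprD addrA.
  have e2 : xs - yt = (- t) *: (x - xs).
    by rewrite /yt scaleNr opprD addrA subrr add0r.
  rewrite e1 e2 !linearZ /= !dotvZr !sqnormZ -/S -/k in h1 h2.
  move: h1 h2 h3; set L := dotv c ('d G yt (x - xs)).
  set P1 := dotv c (G x); set P0 := dotv c (G xs); set Pt := dotv c (G yt).
  rewrite /B; move=> h1 h2 h3.
  have t0' : 0 <= t by rewrite ltW.
  have t1' : 0 <= 1 - t by rewrite subr_ge0 ltW.
  have := ler_wpM2l t0' h1; have := ler_wpM2l t1' h2.
  move=> {}h2 {}h1.
  have : t * (P0 + (1 - t) * (2^-1 * S * k)) <= t * P1.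
    nra.
  by rewrite ler_pM2l.
apply/ler_addgt0Pr => e e0.
pose t := Num.min 2^-1 (e / (B + 1)).
have B1 : 0 < B + 1 by rewrite ltr_wpDl.
have t0 : 0 < t by rewrite /t lt_min invr_gt0 ltr0n divr_gt0.
have t1 : t < 1.
  by rewrite /t gt_min; apply/orP; left; rewrite invf_lt1 // ltr1n.
have te : t <= e / (B + 1) by rewrite /t ge_min lexx orbT.
have h := key t t0 t1.
have tB : t * B <= e.
  apply: le_trans (_ : e / (B + 1) * B <= e); first by rewrite ler_wpM2r.
  rewrite mulrAC ler_pdivrMr // ler_wpM2l ?(ltW e0) //; lra.
lra.
Qed.

Lemma int_pos (R : realType) m (K : set 'rV[R]_m) mu c :
  K° mu -> c != 0 -> (forall k, K k -> 0 <= dotv c k) -> 0 < dotv c mu.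
Proof.
move=> /nbhs_ballP [e /= e0 be] c0 dual.
pose t := e / (2 * (`|c| + 1)).
have c1 : 0 < `|c| + 1 by rewrite ltr_wpDl.
have t0 : 0 < t by rewrite divr_gt0 // mulr_gt0.
have Ky : K (mu - t *: c).
  apply: be; rewrite -ball_normE /ball_ /= opprB addrC subrK normrZ gtr0_norm //.
  rewrite /t mulrAC ltr_pdivrMr ?mulr_gt0 //.
  rewrite ltr_pM2l //; have := normr_ge0 c; lra.
have := dual _ Ky; rewrite dotvBr dotvZr -sqnormE.
have := sqnorm_gt0 c0; nra.
Qed.

Lemma quad_lb (R : realType) (k l v : R) : 0 < k ->
  - (l ^+ 2 / (2 * k)) <= v * l + 2^-1 * v ^+ 2 * k.
Proof.
move=> k0; rewrite -subr_ge0 opprK.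
have -> : v * l + 2^-1 * v ^+ 2 * k + l ^+ 2 / (2 * k) = (k * v + l) ^+ 2 / (2 * k).
  by field; rewrite gt_eqF.
by rewrite divr_ge0 ?sqr_ge0 // mulr_ge0 // ltW.
Qed.

Lemma lb_exists (R : realType) n m (K : set 'rV[R]_m) (G : 'rV[R]_n -> 'rV[R]_m) mu c :
  strongly_Kconvex K G mu -> (forall k, K k -> 0 <= dotv c k) -> 0 < dotv c mu ->
  has_lbound [set dotv c (G x) | x in [set: 'rV[R]_n]].
Proof.
move=> sc dual k0.
pose L v := dotv c ('d G 0 v).
exists (dotv c (G 0) + \sum_(j < n) - ((L (delta_mx 0 j)) ^+ 2 / (2 * dotv c mu))).
move=> _ [y _ <-].
have h := @sc_ineq R n m K G mu c 0 y sc dual.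
rewrite subr0 in h; apply: le_trans h; rewrite -addrA lerD2l.
have -> : dotv c ('d G 0 y) = \sum_(j < n) y 0 j * L (delta_mx 0 j).
  rewrite (_ : \sum_(j < n) y 0 j * L (delta_mx 0 j) =
     \sum_(j < n) dotv c ('d G 0 (y 0 j *: delta_mx 0 j))); last first.
    by apply: eq_bigr => j _; rewrite linearZ dotvZr.
  by rewrite -dotv_sumr -raddf_sum -row_sum_delta.
rewrite /sqnorm -mulrA mulr_suml mulr_sumr -big_split /=.
apply: ler_sum => j _; rewrite mulrA; exact: quad_lb.
Qed.

Unset Implicit Arguments.
Set Strict Implicit.

Theorem lemma3p1 (R : realType) (n m : nat) (K C : set 'rV[R]_m)
  (F G : 'rV[R]_n -> 'rV[R]_m) (l mu : 'rV[R]_m) (xk xk1 : 'rV[R]_n)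
  (ck : 'rV[R]_m) :
  proper_cone K ->
  compact C -> convex_setv C -> ~ C 0 -> cone_hull C = dual_cone K ->
  (forall x, differentiable F x) ->
  K l -> K° mu ->
  surrogate K C l mu F xk G ->
  (forall x, maxoverC C (G xk1) <= maxoverC C (G x)) ->
  C ck -> (forall d, C d -> minoverX G d <= minoverX G ck) ->
  forall x,
    cle K (Hk G F xk x) ((2^-1 * sqnorm (x - xk)) *: l) /\
    dotv ck (F xk1) + 2^-1 * sqnorm (xk1 - x) * dotv ck mu
      <= dotv ck (F x) + 2^-1 * sqnorm (xk - x) * dotv ck l.
Proof.
move=> pK cC cvC nC0 hull Fdiff Kl intmu sur hmin Cck ckmax x.
case: sur => sc ha Hsm H0 dH0.
have dual := Cdual hull.
have part1 z : cle K (Hk G F xk z) ((2^-1 * sqnorm (z - xk)) *: l).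
  case: Hsm => _ /(_ xk z).
  by rewrite H0 dH0 subr0 add0r.
split; first exact: part1.
have Kmu : K mu by apply: interior_subset.
have ck0 : ck != 0 by apply/eqP => e; rewrite e in Cck.
have dk := dual ck _ Cck.
have kpos := int_pos intmu ck0 dk.
have [cb Ccb hcb] := strong_dual cC cvC (ex_intro _ ck Cck) dual Kmu sc hmin.
have phimin y : dotv ck (G xk1) <= dotv ck (G y).
  apply: le_trans (maxover_ub (G xk1) cC Cck) _.
  apply: le_trans (_ : minoverX G cb <= _).
    apply: lb_le_inf; first by exists (dotv cb (G 0)), 0.
    by move=> _ [z _ <-]; exact: hcb.
  apply: le_trans (ckmax cb Ccb) _.
  apply: ge_inf; first exact: (lb_exists sc dk kpos).
  by exists y.
have qg := quad_growth x sc dk (ltW kpos) phimin.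
have h1 := dk _ (ha xk1 hmin).
have h2 := dk _ (part1 x).
rewrite /Hk !(dotvBr, dotvDr, dotvZr) in h1 h2.
rewrite (sqnormB xk x).
lra.
Qed.
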